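(* Let $X$ be a real Banach space and let $x, y \in X$ be non-zero. Then the following are equivalent: (i) there exist $\lambda < 0$ and $r > 0$ such that the open ball $B(\lambda x, r) = \{ z \in X : \|\lambda x - z\| < r\}$ contains $y$ but does not contain the zero vector; (ii) $\rho'_{+}(x, y) < 0$.
   Context: For $x, y$ in a real normed space $X$, the norm derivatives are $\rho'_{+}(x,y) = \lim_{t \to 0^+} \|x\| \frac{\|x+ty\| - \|x\|}{t}$ and $\rho'_{-}(x,y) = \lim_{t \to 0^-} \|x\| \frac{\|x+ty\| - \|x\|}{t}$. Balls are open balls. *)

(* Defs.v *)
From HB Require Import structures.
From mathcomp Require Import all_boot all_order all_algebra.
From mathcomp Require Import all_classical all_reals all_analysis.
Set Implicit Arguments. Unset Strict Implicit. Unset Printing Implicit Defensive.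
Import Order.TTheory GRing.Theory Num.Theory.
Import numFieldNormedType.Exports.
Local Open Scope classical_set_scope.
Local Open Scope ring_scope.

(* Right norm derivative:
   rho'_+(x,y) = lim_{t -> 0+} ||x|| (||x + t y|| - ||x||) / t.
   (The limit always exists in a normed space by convexity of the norm.) *)
Definition rho_plus (R : realType) (X : normedModType R) (x y : X) : R :=
  lim ((fun t : R => `|x| * ((`|x + t *: y| - `|x|) / t)) @ 0^'+).

(* Main.v *)
Require Import Defs.
From HB Require Import structures.
From mathcomp Require Import all_boot all_order all_algebra.
From mathcomp Require Import all_classical all_reals all_analysis.
From mathcomp Require Import lra ring.
Import Order.TTheory GRing.Theory Num.Theory.
Import numFieldNormedType.Exports.
Local Open Scope classical_set_scope.
Local Open Scope ring_scope.

Section S.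
Variables (R : realType) (X : normedModType R) (x y : X).
Let f (t : R) := `|x| * ((`|x + t *: y| - `|x|) / t).

Lemma f_mono s t : 0 < s -> s <= t -> f s <= f t.
Proof.
move=> s0 st; have t0 : 0 < t by apply: lt_le_trans st.
rewrite /f; apply: ler_wpM2l => //.
have key : `|x + s *: y| - `|x| <= s / t * (`|x + t *: y| - `|x|).
  have -> : x + s *: y = (1 - s / t) *: x + (s / t) *: (x + t *: y).
    rewrite scalerDr scalerA mulfVK ?gt_eqF //.
    by rewrite scalerBl scale1r addrA subrK.
  have h1 : 0 <= 1 - s / t by rewrite subr_ge0 ler_pdivrMr // mul1r.
  have h2 : 0 <= s / t by rewrite divr_ge0 // ltW.
  have := ler_normD ((1 - s / t) *: x) ((s / t) *: (x + t *: y)).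
  rewrite (normrZ (1 - s / t)) (normrZ (s / t)) (ger0_norm h1) (ger0_norm h2).
  set a := s / t; set N := `|x|; set M := `|x + t *: y|; set L := `|_ + _|.
  move=> h; nra.
rewrite ler_pdivrMr //.
apply: (le_trans key); rewrite le_eqVlt; apply/orP; left; apply/eqP; field; exact: lt0r_neq0.
Qed.

Let S := f @` [set` `]0, +oo[%R].

Lemma S_lb : has_lbound S.
Proof.
exists (- (`|x| * `|y|)) => z [t]; rewrite /= in_itv /= andbT => t0 <-.
have h := ler_normD (x + t *: y) (- (t *: y)).
rewrite addrK normrN normrZ gtr0_norm // in h.
have : - `|y| <= (`|x + t *: y| - `|x|) / t by rewrite ler_pdivlMr //; lra.
rewrite /f; have := normr_ge0 x; nra.
Qed.

Lemma S_ne : S !=set0.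
Proof. by exists (f 1), 1; rewrite //= in_itv /= andbT. Qed.

Lemma rho_inf : rho_plus x y = inf S.
Proof.
apply: cvg_lim => //.
apply: (@nondecreasing_at_right_cvgr _ f 0 (BInfty _ false)) => //.
- move=> s t; rewrite !in_itv /= !andbT => s0 t0 st; exact: f_mono.
- exact: S_lb.
Qed.
End S.

Theorem mainTheorem2 (R : realType) (X : completeNormedModType R) (x y : X) :
  x != 0 -> y != 0 ->
  ((exists (lambda r : R), lambda < 0 /\ 0 < r /\
      ball (lambda *: x) r y /\ ~ ball (lambda *: x) r 0)
   <-> rho_plus x y < 0).
Proof.
move=> x0 y0; have N0 : 0 < `|x| by rewrite normr_gt0.
rewrite rho_inf -ball_normE /ball_; split.
- move=> [l [r [l0 [r0 [hb hn]]]]].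
  have hn' : r <= `|l| * `|x| by rewrite leNgt -normrZ; apply/negP; rewrite -[X in `|X|]subr0.
  set t := - l^-1.
  have t0 : 0 < t by rewrite /t oppr_gt0 invr_lt0.
  have e : x + t *: y = l^-1 *: (l *: x - y).
    by rewrite scalerBr scalerA (mulVf (ltr0_neq0 l0)) scale1r /t scaleNr.
  have hlt : `|x + t *: y| < `|x|.
    rewrite e normrZ normrV ?unitfE ?ltr0_neq0 //.
    have la : 0 < `|l| by rewrite normr_gt0 ltr0_neq0.
    by rewrite (ltr_pdivrMl _ _ la); apply: (lt_le_trans hb).
  apply: (@le_lt_trans _ _ (`|x| * ((`|x + t *: y| - `|x|) / t))).
    have hg := ge_inf (@S_lb _ _ x y); apply: hg; exists t => //; rewrite /= in_itv /= andbT; exact: t0.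
  have ti : 0 < t^-1 by rewrite invr_gt0.
  have hh : `|x| * ((`|x + t *: y| - `|x|) / t) < 0.
    rewrite (pmulr_rlt0 _ N0) (pmulr_llt0 _ ti); lra.
  exact: hh.
- move=> /(inf_lt (@S_ne _ _ x y))[z [t tA ftz] ft].
  have t0 : 0 < t by move: tA; rewrite /= in_itv /= andbT.
  subst z.
  have hlt : `|x + t *: y| < `|x|.
    have ti : 0 < t^-1 by rewrite invr_gt0.
    have hh : `|x| * ((`|x + t *: y| - `|x|) / t) < 0 by exact: ft.
    move: hh; rewrite (pmulr_rlt0 _ N0) (pmulr_llt0 _ ti); lra.
  exists (- t^-1), (`|x| / t); split; first by rewrite oppr_lt0 invr_gt0.
  split; first by rewrite divr_gt0.
  have e : - t^-1 *: x - y = - t^-1 *: (x + t *: y).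
    by rewrite scalerDr scalerA mulNr mulVf ?gt_eqF // scaleN1r scaleNr //.
  split.
  + rewrite /= e normrZ normrN normrV ?unitfE ?gt_eqF // gtr0_norm // mulrC.
    by rewrite ltr_pM2r ?invr_gt0.
  + rewrite /= subr0 normrZ normrN normrV ?unitfE ?gt_eqF // gtr0_norm // mulrC.
    by rewrite ltxx.
Qed.
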